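(* (i) If $G_n\to G$ in $\hat{\mathcal G}_*[\bar{\mathcal Z},\mathcal Z]$, then $[G_n]\to[G]$ in $\mathcal G_*[\bar{\mathcal Z},\mathcal Z]$. (ii) If $[G_n]\to[G]$ in $\mathcal G_*[\bar{\mathcal Z},\mathcal Z]$ and $G\in\hat{\mathcal G}_*[\bar{\mathcal Z},\mathcal Z]$ is a connected representative of $[G]$, then there exist connected representatives $G_n\in\hat{\mathcal G}_*[\bar{\mathcal Z},\mathcal Z]$ of $[G_n]$, $n\in\mathbb N$, such that $G_n\to G$ in $\hat{\mathcal G}_*[\bar{\mathcal Z},\mathcal Z]$. In other words, the set-valued map $[H]\mapsto\{H'\in\hat{\mathcal G}_*[\bar{\mathcal Z},\mathcal Z]:H'\text{ is a connected representative of }[H]\}$ is lower semicontinuous.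
   Context: Let $\bar{\mathcal Z},\mathcal Z$ be Polish spaces. $\hat{\mathcal G}_*[\bar{\mathcal Z},\mathcal Z]$ is the set of all rooted, simple, locally finite (not necessarily connected) graphs $G=(V,E,o,\bar\vartheta,\vartheta)$ with vertex set $V\subseteq\mathbb N$, root $o\in V$, edge marks $\bar\vartheta\in\bar{\mathcal Z}^E$ and vertex marks $\vartheta\in\mathcal Z^V$. For subsets $S_n,S\subseteq\mathbb N$ (or of the set of pairs of naturals), $S_n\to S$ means $S=\bigcup_n\bigcap_{n'>n}S_{n'}=\bigcap_n\bigcup_{n'>n}S_{n'}$. For $v\in V$, $\mathrm{cl}_v(G)$ is $v$ together with its neighbours in $G$. Convergence in $\hat{\mathcal G}_*$: $G_n=(V_n,E_n,o_n,\bar\vartheta^n,\vartheta^n)\to G=(V,E,o,\bar\vartheta,\vartheta)$ iff (1) $V_n\to V$; (2) $E_n\to E$; (3) $o_n\to o$; (4) for every $e\in E$, $\bar\vartheta^n_e\to\bar\vartheta_e$ along those $n$ with $e\in E_n$; (5) for every $v\in V$, $\vartheta^n_v\to\vartheta_v$ along those $n$ with $v\in V_n$; (6) for every $v\in V$, $\max\mathrm{cl}_v(G_n)\to\max\mathrm{cl}_v(G)$ along those $n$ with $v\in V_n$. Isomorphism classes: two rooted marked graphs are isomorphic if there is a bijection of vertex sets preserving adjacency, root and all marks. $[G]$ denotes the isomorphism class of the connected component of the root of $G$ (with its marks); a representative of a class is a connected rooted marked graph in it. $\mathcal G_*[\bar{\mathcal Z},\mathcal Z]$ is the space of such classes with the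 local topology: $[G_n]\to[G]$ iff for every $m\in\mathbb N$ there is $n_m$ and, for $n>n_m$, rooted graph isomorphisms $\varphi_{n,m}$ from the unmarked ball $B_m(G)$ (vertices within graph distance $m$ of the root) onto $B_m(G_n)$ with $\vartheta^n_{\varphi_{n,m}(v)}\to\vartheta_v$ and $\bar\vartheta^n_{\varphi_{n,m}(e)}\to\bar\vartheta_e$ for all vertices $v$ and edges $e$ of $B_m(G)$. *)

(* Defs.v *)
From Stdlib Require Import Rdefinitions Raxioms.
From mathcomp Require Import all_boot.
From mathcomp Require Import boolp classical_sets topology.

Set Implicit Arguments.
Unset Strict Implicit.
Unset Printing Implicit Defensive.

Definition polish (T : topologicalType) : Prop :=
  exists d : T -> T -> R,
    (forall x y, Rle R0 (d x y)) /\
    (forall x y, d x y = R0 <-> x = y) /\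
    (forall x y, d x y = d y x) /\
    (forall x y z, Rle (d x z) (Rplus (d x y) (d y z))) /\
    (forall (x : T) (A : set T),
        nbhs x A <-> exists e, Rlt R0 e /\ forall y, Rlt (d x y) e -> A y) /\
    (forall u : nat -> T,
        (forall e, Rlt R0 e -> exists N, forall n m,
            (N <= n)%N -> (N <= m)%N -> Rlt (d (u n) (u m)) e) ->
        exists l, forall e, Rlt R0 e -> exists N, forall n,
            (N <= n)%N -> Rlt (d (u n) l) e) /\
    (exists s : nat -> T, forall x e, Rlt R0 e -> exists k, Rlt (d x (s k)) e).

(* An (undirected) edge {u,v}
   is stored once, as the ordered pair (u,v) with u < v.  Marks are total
   functions; only their values on E resp. V are relevant. *)
Record mgraph (Zb Z : Type) := MGraph {
  gV : nat -> Prop;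
  gE : nat * nat -> Prop;
  groot : nat;
  gemark : nat * nat -> Zb;
  gvmark : nat -> Z }.

Section Graphs.
Variables (Zb Z : Type).
Implicit Types (G H : mgraph Zb Z).

Definition adj G (u v : nat) : Prop := gE G (u, v) \/ gE G (v, u).

Definition emk G (u v : nat) : Zb := gemark G (minn u v, maxn u v).

(* membership in \hat G_*: rooted, simple, locally finite *)
Definition wf_graph G : Prop :=
  gV G (groot G) /\
  (forall u v, gE G (u, v) -> (u < v)%N /\ gV G u /\ gV G v) /\
  (forall v, gV G v -> exists b, forall w, adj G v w -> (w <= b)%N).

Definition cl G (v w : nat) : Prop := w = v \/ adj G v w.
Definition is_max_cl G (v k : nat) : Prop :=
  cl G v k /\ forall w, cl G v w -> (w <= k)%N.

Fixpoint within G (m : nat) (v : nat) : Prop :=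
  match m with
  | 0 => v = groot G
  | m'.+1 => within G m' v \/ exists u, within G m' u /\ adj G u v
  end.

Definition incomp G (v : nat) : Prop := exists m, within G m v.
Definition gconnected G : Prop := forall v, gV G v -> incomp G v.

(* rooted isomorphism of the marked root components: [G] = [H] *)
Definition iso_comp G H : Prop :=
  exists phi : nat -> nat,
    phi (groot G) = groot H /\
    (forall v, incomp G v -> incomp H (phi v)) /\
    (forall u v, incomp G u -> incomp G v -> phi u = phi v -> u = v) /\
    (forall w, incomp H w -> exists v, incomp G v /\ phi v = w) /\
    (forall u v, incomp G u -> incomp G v -> (adj G u v <-> adj H (phi u) (phi v))) /\
    (forall v, incomp G v -> gvmark H (phi v) = gvmark G v) /\
    (forall u v, incomp G u -> incomp G v -> adj G u v ->
        emk H (phi u) (phi v) = emk G u v).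

Definition ball_iso G H (m : nat) (phi : nat -> nat) : Prop :=
  phi (groot G) = groot H /\
  (forall v, within G m v -> within H m (phi v)) /\
  (forall u v, within G m u -> within G m v -> phi u = phi v -> u = v) /\
  (forall w, within H m w -> exists v, within G m v /\ phi v = w) /\
  (forall u v, within G m u -> within G m v -> (adj G u v <-> adj H (phi u) (phi v))).

Definition set_cvg (A : Type) (S : nat -> A -> Prop) (S0 : A -> Prop) : Prop :=
  forall x,
    (S0 x <-> exists n, forall n', (n < n')%N -> S n' x) /\
    (S0 x <-> forall n, exists n', (n < n')%N /\ S n' x).

End Graphs.

Definition cvg_along (T : topologicalType) (P : nat -> Prop) (f : nat -> T) (x : T) : Prop :=
  forall A : set T, nbhs x A -> exists N, forall n, (N <= n)%N -> P n -> A (f n).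

Definition hat_cvg (Zb Z : topologicalType) (Gs : nat -> mgraph Zb Z) (G : mgraph Zb Z) : Prop :=
  set_cvg (fun n => gV (Gs n)) (gV G) /\
  set_cvg (fun n => gE (Gs n)) (gE G) /\
  (exists N, forall n, (N <= n)%N -> groot (Gs n) = groot G) /\
  (forall e, gE G e ->
     cvg_along (fun n => gE (Gs n) e) (fun n => gemark (Gs n) e) (gemark G e)) /\
  (forall v, gV G v ->
     cvg_along (fun n => gV (Gs n) v) (fun n => gvmark (Gs n) v) (gvmark G v)) /\
  (forall v, gV G v -> forall k, is_max_cl G v k ->
     exists N, forall n, (N <= n)%N -> gV (Gs n) v -> is_max_cl (Gs n) v k).

(* local convergence [G_n] -> [G] in G_*[Zb, Z], stated on representatives *)
Definition loc_cvg (Zb Z : topologicalType) (Gs : nat -> mgraph Zb Z) (G : mgraph Zb Z) : Prop :=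
  forall m, exists N, exists phi : nat -> nat -> nat,
    (forall n, (N < n)%N -> ball_iso G (Gs n) m (phi n)) /\
    (forall v, within G m v ->
       cvg_along (fun n => (N < n)%N) (fun n => gvmark (Gs n) (phi n v)) (gvmark G v)) /\
    (forall u v, within G m u -> within G m v -> adj G u v ->
       cvg_along (fun n => (N < n)%N) (fun n => emk (Gs n) (phi n u) (phi n v)) (emk G u v)).

(* Main.v *)
Require Import Defs.
From Stdlib Require Import Rdefinitions Raxioms Reals.
From mathcomp Require Import all_boot.
From mathcomp Require Import boolp classical_sets topology.
From mathcomp Require Import zify.
From Stdlib Require Import Classical.
Require Import Defs.
Set Implicit Arguments.
Unset Strict Implicit.

Lemma bounded_choice (P : nat -> Prop) (Q : nat -> nat -> Prop) B :
  (forall u b b', (b <= b')%N -> Q u b -> Q u b') ->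
  (forall u, (u <= B)%N -> P u -> exists b, Q u b) ->
  exists b, forall u, (u <= B)%N -> P u -> Q u b.
Proof.
move=> mono; elim: B => [|B IH] h.
  case: (classic (P 0)) => [P0|nP0].
    have [b hb] := h 0 (leqnn 0) P0; exists b => u; rewrite leqn0 => /eqP -> //.
  by exists 0 => u; rewrite leqn0 => /eqP ->.
have [b1 hb1] : exists b, forall u, (u <= B)%N -> P u -> Q u b.
  by apply: IH => u hu; apply: h; lia.
case: (classic (P B.+1)) => [PB|nPB].
  have [b2 hb2] := h B.+1 (leqnn _) PB.
  exists (maxn b1 b2) => u hu Pu.
  case: (ltnP u B.+1) => hu'.
    by apply: (mono _ b1); [lia| apply: hb1 => //; lia].
  have -> : u = B.+1 by lia.
  by apply: (mono _ b2); [lia|].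
exists b1 => u hu Pu; case: (ltnP u B.+1) => hu'; first by apply: hb1 => //; lia.
have eu : u = B.+1 by lia.
by rewrite eu in Pu; case: nPB.
Qed.

Lemma bounded_ev (P : nat -> Prop) (R : nat -> nat -> Prop) B :
  (forall u, (u <= B)%N -> P u -> exists N, forall n, (N <= n)%N -> R u n) ->
  exists N, forall u, (u <= B)%N -> P u -> forall n, (N <= n)%N -> R u n.
Proof.
move=> h; apply: (bounded_choice (Q := fun u N => forall n, (N <= n)%N -> R u n)); last exact: h.
by move=> u b b' hb H n hn; apply: H; lia.
Qed.

Lemma bounded_ev2 (P : nat -> nat -> Prop) (R : nat -> nat -> nat -> Prop) B :
  (forall u v, (u <= B)%N -> (v <= B)%N -> P u v -> exists N, forall n, (N <= n)%N -> R u v n) ->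
  exists N, forall u v, (u <= B)%N -> (v <= B)%N -> P u v -> forall n, (N <= n)%N -> R u v n.
Proof.
move=> h.
have H1 : forall u, (u <= B)%N -> True -> exists N, forall n, (N <= n)%N ->
     forall v, (v <= B)%N -> P u v -> R u v n.
  move=> u hu _; have [N hN] := @bounded_ev (P u) (R u) B (fun v hv => h u v hu hv).
  by exists N => n hn v hv Puv; apply: hN.
have [N hN] := bounded_ev H1.
by exists N => u v hu hv Puv n hn; apply: hN.
Qed.

Lemma ex_max (P : nat -> Prop) a B : P a -> (forall x, P x -> (x <= B)%N) ->
  exists k, P k /\ forall x, P x -> (x <= k)%N.
Proof.
elim: B a => [|B IH] a Pa hb.
  by exists a; split => // x /hb; have := hb a Pa; lia.
case: (classic (P B.+1)) => [PB|nPB]; first by exists B.+1.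
apply: (IH a Pa) => x Px; have := hb x Px; case: (ltnP x B.+1) => //.
move=> h1 h2; have ex : x = B.+1 by lia.
by rewrite ex in Px; case: nPB.
Qed.

Section GraphFacts.
Variables (Zb Z : Type).
Implicit Types (G H : mgraph Zb Z).

Lemma adj_sym G u v : adj G u v -> adj G v u.
Proof. by rewrite /adj; tauto. Qed.

Lemma adj_wf G u v : wf_graph G -> adj G u v -> [/\ gV G u, gV G v & u <> v].
Proof.
move=> [_ [hE _]] [/hE|/hE] [h1 [h2 h3]]; split => // e; rewrite e in h1; lia.
Qed.

Lemma within_mono G j j' v : (j <= j')%N -> within G j v -> within G j' v.
Proof.
move=> hj; elim: j' hj => [|j' IH] hj.
  by have -> : j = 0 by lia.
case: (ltnP j j'.+1) => h hw; first by left; apply: IH => //; lia.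
have ej : j = j'.+1 by lia.
by rewrite -ej.
Qed.

Lemma within_V G j v : wf_graph G -> within G j v -> gV G v.
Proof.
move=> wf; elim: j v => [|j IH] v /=; first by move=> ->; case: wf.
case; first exact: IH.
by move=> [u [_ huv]]; case: (adj_wf wf huv).
Qed.

Lemma incomp_V G v : wf_graph G -> incomp G v -> gV G v.
Proof. by move=> wf [j hj]; exact: within_V hj. Qed.

Lemma within_adj G j u v : within G j u -> adj G u v -> within G j.+1 v.
Proof. by move=> hu huv; right; exists u. Qed.

Lemma within_bound G j : wf_graph G -> exists b, forall v, within G j v -> (v <= b)%N.
Proof.
move=> wf; elim: j => [|j [b hb]]; first by exists (groot G) => v /= ->.
have m1 : forall u c c', (c <= c')%N -> (forall w, adj G u w -> (w <= c)%N) ->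
    (forall w, adj G u w -> (w <= c')%N).
  by move=> u c c' hc H w /H; lia.
have m2 : forall u, (u <= b)%N -> within G j u -> exists c, forall w, adj G u w -> (w <= c)%N.
  move=> u _ hu; have Vu := within_V wf hu.
  by case: wf => _ [_ hlf]; apply: hlf.
have [b' hb'] := bounded_choice m1 m2.
exists (maxn b b') => v /= [/hb|[u [hu huv]]]; first lia.
by have := hb' u (hb u hu) hu v huv; lia.
Qed.

End GraphFacts.

Section Build.
Variables (Zb Z : Type) (G Gn : mgraph Zb Z) (k c : nat) (psi : nat -> nat).

Definition bV (y : nat) : Prop :=
  ((y < c)%N /\ within G k y) \/
  ((c <= y)%N /\ incomp Gn (y - c) /\ ~ (exists v, within G k v /\ psi v = y - c)).
Definition bf (y : nat) : nat := if (y < c)%N then psi y else y - c.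
Definition build : mgraph Zb Z :=
  @MGraph Zb Z bV (fun e => (e.1 < e.2)%N /\ bV e.1 /\ bV e.2 /\ adj Gn (bf e.1) (bf e.2))
    (groot G) (fun e => emk Gn (bf e.1) (bf e.2)) (fun y => gvmark Gn (bf y)).

Hypotheses (wfG : wf_graph G) (wfGn : wf_graph Gn) (bi : ball_iso G Gn k psi)
  (hc : forall v, within G k v -> (v < c)%N).

Lemma bf_ball v : within G k v -> bV v /\ bf v = psi v.
Proof. by move=> hv; have hvc := hc hv; split; [left|rewrite /bf hvc]. Qed.

Lemma bV_incomp y : bV y -> incomp Gn (bf y).
Proof.
case: bi => _ [hw _].
case=> [[hy hk]|[hy [hi _]]]; rewrite /bf.
  by rewrite hy; exists k; apply: hw.
by have -> : (y < c)%N = false by lia.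
Qed.

Lemma bf_inj y z : bV y -> bV z -> bf y = bf z -> y = z.
Proof.
case: bi => _ [_ [hinj _]].
rewrite /bf; case=> [[hy hky]|[hy [hiy hny]]]; case=> [[hz hkz]|[hz [hiz hnz]]];
  rewrite ?hy ?hz.
- by apply: hinj.
- have -> : (z < c)%N = false by lia.
  by move=> e; case: hnz; exists y.
- have -> : (y < c)%N = false by lia.
  by move=> e; case: hny; exists z.
- have -> : (y < c)%N = false by lia.
  have -> : (z < c)%N = false by lia.
  lia.
Qed.

Lemma bf_surj w : incomp Gn w -> exists y, bV y /\ bf y = w.
Proof.
move=> hw; case: (classic (exists v, within G k v /\ psi v = w)) => [[v [hv e]]|hn].
  by exists v; have [h1 h2] := bf_ball hv; split => //; rewrite h2.
exists (w + c); split.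
  right; split; first lia.
  by have -> : (w + c - c = w)%N by lia.
rewrite /bf; have -> : (w + c < c)%N = false by lia.
lia.
Qed.

Lemma adjH y z : bV y -> bV z -> (adj build y z <-> adj Gn (bf y) (bf z)).
Proof.
move=> hy hz; rewrite /adj /=; split.
  by case=> [[_ [_ [_ h]]]|[_ [_ [_ h]]]] //; apply: adj_sym.
move=> h; have [_ _ hne] := adj_wf wfGn h.
have yz : y <> z by move=> e; apply: hne; rewrite e.
case: (ltnP y z) => l; first by left.
by right; split; [lia|split => //; split => //; apply: adj_sym].
Qed.

Lemma root_b : bV (groot G) /\ bf (groot G) = groot Gn.
Proof.
have [h1 h2] := bf_ball (within_mono (j := 0) (leq0n k) (erefl (groot G))).
by split => //; rewrite h2; case: bi.
Qed.

Lemma adjH_V y z : adj build y z -> bV y /\ bV z.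
Proof. by case=> [[_ [h1 [h2 _]]]|[_ [h1 [h2 _]]]]. Qed.

Lemma withinH j y : within build j y <-> bV y /\ within Gn j (bf y).
Proof.
elim: j y => [|j IH] y /=.
  have [r1 r2] := root_b; split.
    by move=> ->.
  by move=> [hy e]; apply: bf_inj => //; rewrite e r2.
split.
  case=> [/IH [h1 h2]|[u [/IH [hu1 hu2] huy]]]; first by split => //; left.
  have [_ hy] := adjH_V huy.
  by split => //; right; exists (bf u); split => //; apply/adjH.
move=> [hy [h|[u' [hu' hadj]]]]; first by left; apply/IH.
have [u [hu e]] := bf_surj (ex_intro _ j hu').
right; exists u; split; first by apply/IH; rewrite e.
by apply/adjH => //; rewrite e.
Qed.

Lemma incompH y : incomp build y <-> bV y.
Proof.
split; first by move=> [j /withinH []].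
move=> hy; have [j hj] := bV_incomp hy.
by exists j; apply/withinH.
Qed.

Lemma wf_build : wf_graph build.
Proof.
split; first exact: root_b.1.
split; first by move=> u v [h1 [h2 [h3 _]]].
move=> v hv.
have Vn := incomp_V wfGn (bV_incomp hv).
have [b hb] := (wfGn.2.2 _ Vn).
exists (b + c) => w hw.
have [_ hw'] := adjH_V hw.
have /hb : adj Gn (bf v) (bf w) by apply/adjH.
rewrite /bf; case: ifP => //; lia.
Qed.

Lemma conn_build : gconnected build.
Proof. by move=> v /incompH. Qed.

Lemma iso_build : iso_comp Gn build.
Proof.
have H : forall w, exists y, incomp Gn w -> bV y /\ bf y = w.
  move=> w; case: (classic (incomp Gn w)) => h; last by exists 0.
  by have [y hy] := bf_surj h; exists y.
have [phi hphi] := choice H.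
have [r1 r2] := root_b.
have rin : incomp Gn (groot Gn) by exists 0.
exists phi; split; [|split; [|split; [|split; [|split; [|split]]]]].
- have [h1 h2] := hphi _ rin; apply: bf_inj => //=; by rewrite h2 r2.
- by move=> v hv; apply/incompH; exact: (hphi v hv).1.
- move=> u v hu hv e.
  by rewrite -(hphi u hu).2 -(hphi v hv).2 e.
- move=> w /incompH hw; exists (bf w); split; first exact: bV_incomp.
  have hi := bV_incomp hw; have [h1 h2] := hphi _ hi.
  by apply: bf_inj.
- move=> u v hu hv; have [h1 h2] := hphi u hu; have [h3 h4] := hphi v hv.
  by rewrite adjH // h2 h4.
- by move=> v hv /=; rewrite (hphi v hv).2.
- move=> u v hu hv _; have [h1 h2] := hphi u hu; have [h3 h4] := hphi v hv.
  rewrite /emk /=.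
  case: (leqP (phi u) (phi v)) => l; first by rewrite h2 h4.
  rewrite h2 h4 /emk; congr gemark; congr pair; lia.
Qed.

End Build.

Lemma set_cvg_ev (A : Type) (S : nat -> A -> Prop) S0 x :
  set_cvg S S0 -> S0 x -> exists N, forall n, (N <= n)%N -> S n x.
Proof.
move=> h Sx; have [[/(_ Sx) [N hN] _] _] := h x.
by exists N.+1 => n hn; apply: hN.
Qed.

Lemma set_cvg_nev (A : Type) (S : nat -> A -> Prop) S0 x :
  set_cvg S S0 -> ~ S0 x -> exists N, forall n, (N <= n)%N -> ~ S n x.
Proof.
move=> h Sx; have [_ [_ h2]] := h x.
have : ~ (forall n, exists n', (n < n')%N /\ S n' x) by move=> H; apply: Sx; apply: h2.
move=> /not_all_ex_not [N hN]; exists N.+1 => n hn Snx; apply: hN; exists n; split => //.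
Qed.

Lemma part1 (Zb Z : topologicalType) (Gs : nat -> mgraph Zb Z) (G : mgraph Zb Z) :
  (forall n, wf_graph (Gs n)) -> wf_graph G -> hat_cvg Gs G -> loc_cvg Gs G.
Proof.
move=> wfs wf [hV [hE [[N3 hroot] [hem [hvm hcl]]]]] m.
have [K hK] := within_bound m.+1 wf.
have inK : forall u, within G m u -> (u <= K)%N.
  by move=> u hu; apply: hK; apply: (within_mono (j := m)).
have [N1 hN1] : exists N, forall u, (u <= K)%N -> within G m u -> forall n, (N <= n)%N ->
    gV (Gs n) u /\ forall w, cl (Gs n) u w -> (w <= K)%N.
  apply: bounded_ev => u _ hu.
  have Vu := within_V wf hu.
  have clK : forall x, cl G u x -> (x <= K)%N.
    move=> x [->|hx]; first exact: inK.
    by apply: hK; apply: within_adj hx.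
  have [k [hk1 hk2]] := @ex_max (cl G u) u K (or_introl erefl) clK.
  have [Na hNa] := hcl u Vu k (conj hk1 hk2).
  have [Nb hNb] := set_cvg_ev hV Vu.
  exists (maxn Na Nb) => n hn.
  have Vn : gV (Gs n) u by apply: hNb; lia.
  split => // w hw.
  have [_ h2] := hNa n ltac:(lia) Vn.
  have := h2 w hw; have := clK k hk1; lia.
have [N2 hN2] : exists N, forall a b, (a <= K)%N -> (b <= K)%N -> True -> forall n, (N <= n)%N ->
    (gE (Gs n) (a, b) <-> gE G (a, b)).
  apply: bounded_ev2 => a b _ _ _.
  case: (classic (gE G (a, b))) => h.
    have [N hN] := set_cvg_ev hE h.
    by exists N => n hn; split => // _; apply: hN.
  have [N hN] := set_cvg_nev hE h.
  by exists N => n hn; split => // /(hN n hn).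
have [Nall hNall] : exists Nall, Nall = maxn N3 (maxn N1 N2) by eexists.
have adjT : forall n, (Nall < n)%N -> forall a b, (a <= K)%N -> (b <= K)%N ->
    (adj (Gs n) a b <-> adj G a b).
  move=> n hn a b ha hb; rewrite /adj.
  rewrite (hN2 a b ha hb I n ltac:(lia)) (hN2 b a hb ha I n ltac:(lia)) //.
have wT : forall n, (Nall < n)%N -> forall j, (j <= m)%N -> forall v,
    (within (Gs n) j v <-> within G j v).
  move=> n hn; elim => [|j IH] hj v /=.
    by rewrite hroot //; lia.
  split.
    case => [/(IH ltac:(lia))|[u [hu huv]]]; first by left.
    have hu' : within G j u by apply/(IH ltac:(lia)).
    have huK : (u <= K)%N by apply: inK; apply: (within_mono (j := j)) => //; lia.
    have [_ hb] := hN1 u huK (within_mono (j := j) (j' := m) ltac:(lia) hu') n ltac:(lia).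
    have hvK : (v <= K)%N by apply: hb; right.
    by right; exists u; split => //; apply/(adjT n hn u v huK hvK).
  case => [/(IH ltac:(lia))|[u [hu huv]]]; first by left.
  have huK : (u <= K)%N by apply: inK; apply: (within_mono (j := j)) => //; lia.
  have hvK : (v <= K)%N.
    by apply: hK; apply: (within_mono (j := j.+1)); [lia|apply: within_adj huv].
  by right; exists u; split; [apply/(IH ltac:(lia))|apply/(adjT n hn u v huK hvK)].
exists Nall, (fun _ v => v); split; [|split].
- move=> n hn; split; [by rewrite hroot //; lia|split; [|split; [|split]]].
  + by move=> v /(wT n hn m (leqnn m)).
  + by [].
  + by move=> w /(wT n hn m (leqnn m)) hw; exists w.
  + by move=> u v hu hv; rewrite (adjT n hn u v (inK u hu) (inK v hv)).
- move=> v hv A hA.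
  have [N hN] := hvm v (within_V wf hv) A hA.
  exists (maxn N (Nall.+1)) => n hn hn'.
  apply: hN; first lia.
  by have [] := hN1 v (inK v hv) hv n ltac:(lia).
- move=> u v hu hv huv A hA.
  have [[huv' hlt] | [hvu' hlt]] : (gE G (u, v) /\ (u < v)%N) \/ (gE G (v, u) /\ (v < u)%N).
    case: huv => h; [left|right]; split => //; case: wf => _ [hw _]; by case: (hw _ _ h).
  + have ee : (minn u v, maxn u v) = (u, v) by congr pair; lia.
    rewrite /emk ee in hA *.
    have [N' hN'] := hem (u, v) huv' A hA.
    exists (maxn N' Nall.+1) => n hn hn'; apply: hN'; first lia.
    by apply/(hN2 u v (inK u hu) (inK v hv) I n ltac:(lia)).
  + have ee : (minn u v, maxn u v) = (v, u) by congr pair; lia.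
    rewrite /emk ee in hA *.
    have [N' hN'] := hem (v, u) hvu' A hA.
    exists (maxn N' Nall.+1) => n hn hn'; apply: hN'; first lia.
    by apply/(hN2 v u (inK v hv) (inK u hu) I n ltac:(lia)).
Qed.

Lemma inv_pos m : Rlt R0 (Rinv (INR m.+1)).
Proof. by apply: Rinv_0_lt_compat; apply: lt_0_INR; apply/ltP. Qed.

Lemma inv_small m1 L : (0 < m1)%N -> (m1 <= L)%N -> Rle (Rinv (INR L.+1)) (Rinv (INR m1)).
Proof.
move=> h1 h2; apply: Rinv_le_contravar; first by apply: lt_0_INR; apply/ltP.
by apply: le_INR; apply/leP; lia.
Qed.

Lemma set_cvg_of (A : Type) (S : nat -> A -> Prop) S0 :
  (forall x, S0 x -> exists N, forall n, (N <= n)%N -> S n x) ->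
  (forall x, ~ S0 x -> exists N, forall n, (N <= n)%N -> ~ S n x) -> set_cvg S S0.
Proof.
move=> h1 h2 x; split; split.
- by move=> /h1 [N hN]; exists N => n hn; apply: hN; lia.
- move=> [N hN]; apply: NNPP => hx; have [N' hN'] := h2 x hx.
  by apply: (hN' (maxn N N').+1); [lia| apply: hN; lia].
- by move=> /h1 [N hN] n; exists (maxn N n).+1; split; [lia|apply: hN; lia].
- move=> hf; apply: NNPP => hx; have [N' hN'] := h2 x hx.
  have [n' [hn' hs]] := hf N'; by apply: (hN' n'); [lia|].
Qed.

Lemma ball_iso_within (Zb Z : Type) (G H : mgraph Zb Z) L psi j v :
  ball_iso G H L psi -> (j <= L)%N -> within G j v -> within H j (psi v).
Proof.
move=> [hr [hw [_ [_ ha]]]]; elim: j v => [|j IH] v hj /=; first by move=> ->.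
case=> [h|[u [hu huv]]]; first by left; apply: IH => //; lia.
right; exists (psi u); split; first by apply: IH => //; lia.
apply/ha => //; first by apply: (within_mono (j := j)) => //; lia.
by apply: (within_mono (j := j.+1)) => //; right; exists u.
Qed.

Lemma ball_iso0 (Zb Z : Type) (G H : mgraph Zb Z) :
  wf_graph G -> wf_graph H -> ball_iso G H 0 (fun _ => groot H).
Proof.
move=> wG wH; split => //; split => //; split; first by move=> u v /= -> ->.
split; first by move=> w /= ->; exists (groot G).
move=> u v /= -> ->; split => h.
  by have [_ _ []] := adj_wf wG h.
by have [_ _ []] := adj_wf wH h.
Qed.

Lemma part2 (Zb Z : topologicalType) (hZb : polish Zb) (hZ : polish Z)
  (Gs : nat -> mgraph Zb Z) (G : mgraph Zb Z) :
  (forall n, wf_graph (Gs n)) -> wf_graph G -> gconnected G -> loc_cvg Gs G ->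
  exists Hs : nat -> mgraph Zb Z,
    (forall n, wf_graph (Hs n) /\ gconnected (Hs n) /\ iso_comp (Gs n) (Hs n)) /\
    hat_cvg Hs G.
Proof.
move=> wfs wf conn lc.
have [dZ [_ [_ [_ [_ [nbZ _]]]]]] := hZ.
have [dB [_ [_ [_ [_ [nbB _]]]]]] := hZb.
pose closeV m n (psi : nat -> nat) := forall v, within G m v ->
  Rlt (dZ (gvmark G v) (gvmark (Gs n) (psi v))) (Rinv (INR m.+1)).
pose closeE m n (psi : nat -> nat) := forall u v, within G m u -> within G m v -> adj G u v ->
  Rlt (dB (emk G u v) (emk (Gs n) (psi u) (psi v))) (Rinv (INR m.+1)).
have SA : forall m, exists p : nat * (nat -> nat -> nat), forall n, (p.1 <= n)%N ->
    ball_iso G (Gs n) m (p.2 n) /\ closeV m n (p.2 n) /\ closeE m n (p.2 n).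
  move=> m; have [N0 [Phi [hb [hvm hem]]]] := lc m.
  have [K hK] := within_bound m wf.
  have [Nv hNv] : exists N, forall u, (u <= K)%N -> within G m u -> forall n, (N <= n)%N ->
      (N0 < n)%N -> Rlt (dZ (gvmark G u) (gvmark (Gs n) (Phi n u))) (Rinv (INR m.+1)).
    apply: bounded_ev => u _ hu.
    have hA : nbhs (gvmark G u) (fun y => Rlt (dZ (gvmark G u) y) (Rinv (INR m.+1))).
      by apply/nbZ; exists (Rinv (INR m.+1)); split => //; exact: inv_pos.
    exact: hvm u hu _ hA.
  have [Ne hNe] : exists N, forall u v, (u <= K)%N -> (v <= K)%N ->
      (within G m u /\ within G m v /\ adj G u v) -> forall n, (N <= n)%N -> (N0 < n)%N ->
      Rlt (dB (emk G u v) (emk (Gs n) (Phi n u) (Phi n v))) (Rinv (INR m.+1)).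
    apply: bounded_ev2 => u v _ _ [hu [hv huv]].
    have hA : nbhs (emk G u v) (fun y => Rlt (dB (emk G u v) y) (Rinv (INR m.+1))).
      by apply/nbB; exists (Rinv (INR m.+1)); split => //; exact: inv_pos.
    exact: hem u v hu hv huv _ hA.
  exists (maxn N0.+1 (maxn Nv Ne), Phi) => n /= hn; split; first by apply: hb; lia.
  split.
    by move=> v hv; apply: hNv => //; [apply: hK|lia|lia].
  by move=> u v hu hv huv; apply: hNe => //; [apply: hK|apply: hK|lia|lia].
have [fA hfA] := choice SA.
have [M hM] : exists M : nat -> nat, forall j, M j = ((fA j).1 + j)%N.
  by exists (fun j => ((fA j).1 + j)%N).
have SB : forall n, exists p : nat * (nat -> nat), ball_iso G (Gs n) p.1 p.2 /\
    forall m, (M m <= n)%N -> (m <= p.1)%N /\ closeV p.1 n p.2 /\ closeE p.1 n p.2.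
  move=> n; case: (classic (exists j, (M j <= n)%N)) => [[j hj]|hno].
    have hbd : forall x, (M x <= n)%N -> (x <= n)%N by move=> x; rewrite hM; lia.
    have [k [hk1 hk2]] := @ex_max (fun j => (M j <= n)%N) j n hj hbd.
    have [h1 [h2 h3]] := hfA k n ltac:(rewrite hM in hk1; lia).
    by exists (k, (fA k).2 n); split => // m hm; split; [exact: hk2|split].
  exists (0, fun _ => groot (Gs n)); split; first exact: ball_iso0.
  by move=> m hm; case: hno; exists m.
have [fB hfB] := choice SB.
have SC : forall k, exists c, (k <= c)%N /\ forall v, within G k v -> (v < c)%N.
  move=> k; have [b hb] := within_bound k wf.
  by exists (maxn k b).+1; split; [lia|move=> v /hb; lia].
have [fc hfc] := choice SC.
have bi : forall n, ball_iso G (Gs n) (fB n).1 (fB n).2 := fun n => (hfB n).1.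
have hcn : forall n v, within G (fB n).1 v -> (v < fc (fB n).1)%N := fun n => (hfc _).2.
have lev : forall m n, (M m <= n)%N -> (m <= (fB n).1)%N /\ closeV (fB n).1 n (fB n).2 /\
    closeE (fB n).1 n (fB n).2 := fun m n h => (hfB n).2 m h.
have ballW : forall m n v, (M m <= n)%N -> within G m v -> within G (fB n).1 v.
  by move=> m n v hm hv; apply: (within_mono (j := m)) => //; exact: (lev m n hm).1.
have ballF : forall m n v, (M m <= n)%N -> within G m v ->
    bV G (Gs n) (fB n).1 (fc (fB n).1) (fB n).2 v /\ bf (fc (fB n).1) (fB n).2 v = (fB n).2 v.
  by move=> m n v hm hv; apply: (bf_ball (Gs n) (fB n).2 (hcn n)); exact: ballW hv.
have negV : forall x, ~ gV G x -> exists N, forall n, (N <= n)%N ->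
    ~ bV G (Gs n) (fB n).1 (fc (fB n).1) (fB n).2 x.
  move=> x hx; exists (M x.+1) => n hn [[h1 h2]|[h1 _]].
    by apply: hx; exact: within_V wf h2.
  by have := (lev _ _ hn).1; have := (hfc (fB n).1).1; lia.
have adjI : forall n u v, within G (fB n).1 u -> within G (fB n).1 v ->
    (adj G u v <-> adj (Gs n) ((fB n).2 u) ((fB n).2 v)).
  by move=> n u v hu hv; have [_ [_ [_ [_ h]]]] := bi n; apply: h.
exists (fun n => build G (Gs n) (fB n).1 (fc (fB n).1) (fB n).2); split.
  move=> n; split; first exact: wf_build (wfs n) (bi n) (hcn n).
  split; first exact: conn_build (wfs n) (bi n) (hcn n).
  exact: iso_build (wfs n) (bi n) (hcn n).
split; [|split; [|split; [|split; [|split]]]].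
- apply: set_cvg_of => x; last exact: negV.
  move=> /conn [m hm]; exists (M m) => n hn /=; exact: (ballF m n x hn hm).1.
- apply: set_cvg_of => -[a b] hab.
    have [hlt [Va Vb]] := wf.2.1 a b hab.
    have [ma hma] := conn a Va; have [mb hmb] := conn b Vb.
    have hma' := within_mono (j := ma) (j' := maxn ma mb) ltac:(lia) hma.
    have hmb' := within_mono (j := mb) (j' := maxn ma mb) ltac:(lia) hmb.
    exists (M (maxn ma mb)) => n hn /=.
    have [Ba ea] := ballF _ n a hn hma'; have [Bb eb] := ballF _ n b hn hmb'.
    split => //; split => //; split => //; rewrite ea eb.
    by apply/(adjI n a b (ballW _ _ _ hn hma') (ballW _ _ _ hn hmb')); left.
  case: (classic (gV G a)) => Va; last first.
    by have [N hN] := negV a Va; exists N => n hn /= [_ [h _]]; exact: hN n hn h.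
  case: (classic (gV G b)) => Vb; last first.
    by have [N hN] := negV b Vb; exists N => n hn /= [_ [_ [h _]]]; exact: hN n hn h.
  have [ma hma] := conn a Va; have [mb hmb] := conn b Vb.
  have hma' := within_mono (j := ma) (j' := maxn ma mb) ltac:(lia) hma.
  have hmb' := within_mono (j := mb) (j' := maxn ma mb) ltac:(lia) hmb.
  exists (M (maxn ma mb)) => n hn /= [hlt [_ [_ hadj]]].
  have [Ba ea] := ballF _ n a hn hma'; have [Bb eb] := ballF _ n b hn hmb'.
  rewrite ea eb in hadj.
  move/(adjI n a b (ballW _ _ _ hn hma') (ballW _ _ _ hn hmb')): hadj => -[//|h].
  by have := (wf.2.1 _ _ h).1; lia.
- by exists 0.
- move=> -[a b] hab A hA.
  have [hlt [Va Vb]] := wf.2.1 a b hab.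
  have [e [he heA]] := (nbB _ A).1 hA.
  have [m1 [hm1 hm1']] := archimed_cor1 e he.
  have hm1p : (0 < m1)%N by apply/ltP.
  have [ma hma] := conn a Va; have [mb hmb] := conn b Vb.
  set m0 := maxn (maxn ma mb) m1.
  have hma' := within_mono (j := ma) (j' := m0) ltac:(lia) hma.
  have hmb' := within_mono (j := mb) (j' := m0) ltac:(lia) hmb.
  exists (M m0) => n hn _ /=.
  have [Ba ea] := ballF _ n a hn hma'; have [Bb eb] := ballF _ n b hn hmb'.
  rewrite ea eb; apply: heA.
  have [hL [_ hcE]] := lev _ _ hn.
  have := hcE a b (ballW _ _ _ hn hma') (ballW _ _ _ hn hmb') (or_introl hab).
  have -> : emk G a b = gemark G (a, b) by rewrite /emk; congr gemark; congr pair; lia.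
  move=> h; apply: Rlt_trans hm1; apply: Rlt_le_trans h _.
  by apply: inv_small => //; lia.
- move=> v Vv A hA.
  have [e [he heA]] := (nbZ _ A).1 hA.
  have [m1 [hm1 hm1']] := archimed_cor1 e he.
  have hm1p : (0 < m1)%N by apply/ltP.
  have [ma hma] := conn v Vv.
  set m0 := maxn ma m1.
  have hma' := within_mono (j := ma) (j' := m0) ltac:(lia) hma.
  exists (M m0) => n hn _ /=.
  have [Ba ea] := ballF _ n v hn hma'.
  rewrite ea; apply: heA.
  have [hL [hcV _]] := lev _ _ hn.
  have h := hcV v (ballW _ _ _ hn hma').
  apply: Rlt_trans hm1; apply: Rlt_le_trans h _.
  by apply: inv_small => //; lia.
- move=> v Vv k [hk1 hk2].
  have [m0 hm0] := conn v Vv.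
  exists (M m0.+1) => n hn _.
  have hm0' := within_mono (j' := m0.+1) (j := m0) (leqnSn m0) hm0.
  have [Bv ev] := ballF _ n v hn hm0'.
  have hL := (lev _ _ hn).1.
  have clE : forall w, cl (build G (Gs n) (fB n).1 (fc (fB n).1) (fB n).2) v w <-> cl G v w.
    move=> w; split => -[->|h]; try by left.
      right; have [_ Bw] := adjH_V h.
      move: h; rewrite (adjH (wfs n) Bv Bw) ev => h.
      have hv0 := ball_iso_within (bi n) (j := m0) ltac:(lia) hm0.
      have hw1 : within (Gs n) (fB n).1 (bf (fc (fB n).1) (fB n).2 w).
        by apply: (within_mono (j := m0.+1)) => //; exact: within_adj hv0 h.
      have [_ [_ [_ [hs _]]]] := bi n.
      have [u [hu eu]] := hs _ hw1.
      have [Bu eu'] := bf_ball (Gs n) (fB n).2 (hcn n) hu.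
      have euw : u = w by apply: (bf_inj (bi n) Bu Bw); rewrite eu' eu.
      rewrite -euw; apply/(adjI n v u (ballW _ _ _ hn hm0') hu).
      by rewrite eu.
    right; have hw : within G m0.+1 w by exact: within_adj hm0 h.
    have [Bw ew] := ballF _ n w hn hw.
    rewrite /cl (adjH (wfs n) Bv Bw) ev ew.
    by apply/(adjI n v w (ballW _ _ _ hn hm0') (ballW _ _ _ hn hw)).
  split; first by apply/clE.
  by move=> w /clE; exact: hk2.
Qed.

Unset Implicit Arguments.

Theorem mainTheorem17 (Zb Z : topologicalType) (hZb : polish Zb) (hZ : polish Z) :
  (forall (Gs : nat -> mgraph Zb Z) (G : mgraph Zb Z),
      (forall n, wf_graph (Gs n)) -> wf_graph G ->
      hat_cvg Gs G -> loc_cvg Gs G) /\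
  (forall (Gs : nat -> mgraph Zb Z) (G : mgraph Zb Z),
      (forall n, wf_graph (Gs n)) -> wf_graph G -> gconnected G ->
      loc_cvg Gs G ->
      exists Hs : nat -> mgraph Zb Z,
        (forall n, wf_graph (Hs n) /\ gconnected (Hs n) /\ iso_comp (Gs n) (Hs n)) /\
        hat_cvg Hs G).
Proof.
split.
  by move=> Gs G wfs wf h; apply: part1.
by move=> Gs G wfs wf conn lc; have := @part2 Zb Z hZb hZ Gs G wfs wf conn lc.
Qed.
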